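(* Let $A$ be a separable Banach algebra with $A^2=A$ and $\Phi_A\neq\emptyset$. Then $\inf\{\|\phi\|:\phi\in\Phi_A\}>0$.
   Context: $A^2$ denotes the linear span of all products $ab$, $a,b\in A$. $\Phi_A$ is the set of nonzero multiplicative linear functionals (characters) on $A$, and $\|\phi\|$ is the norm of $\phi$ as a functional on $A$. *)

(* Defs.v *)
From HB Require Import structures.
From mathcomp Require Import all_boot all_order all_algebra.
From mathcomp Require Import all_classical all_reals all_analysis.
From mathcomp Require Import complex.
Set Implicit Arguments. Unset Strict Implicit. Unset Printing Implicit Defensive.
Import Order.TTheory GRing.Theory Num.Theory.
Import numFieldNormedType.Exports.
Local Open Scope classical_set_scope.
Local Open Scope ring_scope.

Definition banach_algebra_mul (R : realType) (V : completeNormedModType R[i])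
    (mul : V -> V -> V) : Prop :=
  [/\ forall a b c : V, mul a (mul b c) = mul (mul a b) c,
      forall (k : R[i]) (a b c : V), mul (k *: a + b) c = k *: mul a c + mul b c,
      forall (k : R[i]) (a b c : V), mul a (k *: b + c) = k *: mul a b + mul a c
    & forall a b : V, `|mul a b| <= `|a| * `|b| ].

Definition sq_span (R : realType) (V : completeNormedModType R[i])
    (mul : V -> V -> V) : set V :=
  [set x | exists (n : nat) (c : 'I_n -> R[i]) (a b : 'I_n -> V),
             x = \sum_(i < n) c i *: mul (a i) (b i)].

Definition separable (T : topologicalType) : Prop :=
  exists D : set T, countable D /\ dense D.

Definition is_character (R : realType) (V : completeNormedModType R[i])
    (mul : V -> V -> V) (phi : V -> R[i]) : Prop :=
  [/\ forall (k : R[i]) (x y : V), phi (k *: x + y) = k * phi x + phi y,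
      forall x y : V, phi (mul x y) = phi x * phi y
    & exists x : V, phi x != 0].

Definition functional_norm (R : realType) (V : completeNormedModType R[i])
    (phi : V -> R[i]) : \bar R :=
  ereal_sup [set (complex.Re `|phi x|)%:E | x in [set x : V | `|x| <= 1]].

(* Main.v *)
Require Import Defs.
From HB Require Import structures.
From mathcomp Require Import all_boot all_order all_algebra.
From mathcomp Require Import all_classical all_reals all_analysis.
From mathcomp Require Import complex.
From mathcomp Require Import ring lra.
Import Order.TTheory GRing.Theory Num.Theory.
Import numFieldNormedType.Exports.
Local Open Scope classical_set_scope.
Local Open Scope ring_scope.
Set Warnings "-notation-overridden -notation-incompatible-prefix -ambiguous-paths -deprecated".
Set Implicit Arguments. Unset Strict Implicit. Unset Printing Implicit Defensive.
Section Helpers.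
Variable R : realType.

Lemma ReC {u : R[i]} : 0 <= u -> u = (complex.Re u)%:C%C.
Proof. by move=> h; rewrite RRe_real // ger0_real. Qed.

Lemma Re_le {u v : R[i]} : u <= v -> complex.Re u <= complex.Re v.
Proof. by rewrite lecE => /andP[]. Qed.

Lemma Re_lt {u v : R[i]} : u < v -> complex.Re u < complex.Re v.
Proof. by rewrite ltcE => /andP[]. Qed.

Lemma ReCK (a : R) : complex.Re (a%:C%C) = a.
Proof. by []. Qed.

Definition aC (z : R[i]) : R := complex.Re `|z|.

Lemma aC_ge0 z : 0 <= aC z.
Proof. by have := Re_le (normr_ge0 z). Qed.

Lemma aCM z w : aC (z * w) = aC z * aC w.
Proof. by rewrite /aC normrM (ReC (normr_ge0 z)) (ReC (normr_ge0 w)) -rmorphM. Qed.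

Lemma aCD z w : aC (z + w) <= aC z + aC w.
Proof. by have := Re_le (ler_normD z w); rewrite raddfD. Qed.

Lemma aC_eq0 z : aC z = 0 -> z = 0.
Proof. by move=> h; apply/normr0_eq0; rewrite (ReC (normr_ge0 z)) /aC in h *; rewrite h. Qed.

Lemma aCN z : aC (- z) = aC z.
Proof. by rewrite /aC normrN. Qed.

Lemma aCR (a : R) : aC (a%:C%C) = `|a|.
Proof. by rewrite /aC normc_def /= expr0n /= addr0 sqrtr_sqr. Qed.

Variable V : completeNormedModType R[i].
Definition nV (x : V) : R := complex.Re `|x|.

Lemma nVC (x : V) : `|x| = (nV x)%:C%C.
Proof. exact/ReC/normr_ge0. Qed.

Lemma nV_ge0 x : 0 <= nV x.
Proof. by have := Re_le (normr_ge0 x). Qed.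

Lemma nVD x y : nV (x + y) <= nV x + nV y.
Proof. by have := Re_le (ler_normD x y); rewrite raddfD. Qed.

Lemma nVZ k x : nV (k *: x) = aC k * nV x.
Proof. by rewrite /nV normrZ (ReC (normr_ge0 k)) (nVC x) -rmorphM. Qed.

Lemma nVN x : nV (- x) = nV x.
Proof. by rewrite /nV normrN. Qed.

Lemma nV0 : nV 0 = 0.
Proof. by rewrite /nV normr0. Qed.

Lemma nVB x y : nV (x - y) = nV (y - x).
Proof. by rewrite /nV distrC. Qed.

End Helpers.
Section Char.
Variables (R : realType) (V : completeNormedModType R[i]) (mul : V -> V -> V).
Variable phi : V -> R[i].
Hypothesis hphi : is_character mul phi.

Lemma phiD x y : phi (x + y) = phi x + phi y.
Proof. by have [L _ _] := hphi; have := L 1 x y; rewrite scale1r mul1r. Qed.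

Lemma phi0 : phi 0 = 0.
Proof. have h := phiD 0 0; rewrite addr0 in h. by apply: (@addrI _ (phi 0)); rewrite addr0 -h. Qed.

Lemma phiZ k x : phi (k *: x) = k * phi x.
Proof. by have [L _ _] := hphi; have := L k x 0; rewrite !addr0 phi0 addr0. Qed.

Lemma phiN x : phi (- x) = - phi x.
Proof. by rewrite -scaleN1r phiZ mulN1r. Qed.

Lemma phiB x y : phi (x - y) = phi x - phi y.
Proof. by rewrite phiD phiN. Qed.

Lemma phiM x y : phi (mul x y) = phi x * phi y.
Proof. by have [_ M _] := hphi. Qed.

Lemma phi_sum n (F : 'I_n -> V) : phi (\sum_(i < n) F i) = \sum_(i < n) phi (F i).
Proof. exact: (big_morph phi phiD phi0). Qed.

Lemma FN1 x : nV x <= 1 -> ((aC (phi x))%:E <= functional_norm phi)%E.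
Proof.
move=> hx; apply: ereal_sup_ubound; exists x => //=.
by rewrite nVC -[1 : R[i]]/((1 : R)%:C%C) lecR.
Qed.

Lemma FN2 (c D : R) : 0 < c -> (forall x, nV x <= 1 -> c * aC (phi x) <= D) ->
  (functional_norm phi <= (D / c)%:E)%E.
Proof.
move=> c0 H; apply: ge_ereal_sup => _ [x hx <-].
rewrite lee_fin ler_pdivlMr // mulrC; apply: H.
by have := Re_le hx; rewrite -/(nV x).
Qed.

Lemma FN_ge0 : (0%:E <= functional_norm phi)%E.
Proof. by have := FN1 (x:=0); rewrite nV0 phi0 /aC normr0 => /(_ ler01). Qed.

Lemma FN_bound (N : R) : functional_norm phi = N%:E -> forall x, aC (phi x) <= N * nV x.
Proof.
move=> hN x; have [->|x0] := eqVneq x 0.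
  by rewrite phi0 nV0 mulr0 /aC normr0.
have nx : 0 < nV x.
  rewrite lt_def nV_ge0 andbT; apply/eqP => h; move: x0; rewrite -normr_eq0 nVC h.
  by rewrite eqxx.
pose y := ((nV x)^-1)%:C%C *: x.
have ny : nV y = 1 by rewrite /y nVZ aCR ger0_norm ?invr_ge0 ?nV_ge0 // mulVf // gt_eqF.
have := FN1 (x:=y); rewrite ny hN lee_fin => /(_ (lexx _)).
rewrite /y phiZ aCM aCR ger0_norm ?invr_ge0 ?nV_ge0 //.
by rewrite -ler_pdivlMl ?invr_gt0 // invrK mulrC.
Qed.

End Char.
Definition Sm (R : realType) (V : completeNormedModType R[i]) (mul : V -> V -> V) (m : nat) : set V :=
  [set x | exists n, (n <= m)%N /\ exists (a b : 'I_n -> V),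
     (forall i, nV (a i) <= m%:R /\ nV (b i) <= m%:R) /\ x = \sum_(i < n) mul (a i) (b i)].

Lemma aC_sum (R : realType) n (F : 'I_n -> R[i]) : aC (\sum_(i < n) F i) <= \sum_(i < n) aC (F i).
Proof.
apply: (big_ind2 (fun z r => aC z <= r)).
- by rewrite /aC normr0.
- move=> x1 x2 y1 y2 h1 h2; apply: le_trans (aCD _ _) _; exact: lerD.
- by [].
Qed.

Lemma Sm_bound (R : realType) (V : completeNormedModType R[i]) (mul : V -> V -> V) phi
  (hphi : is_character mul phi) (N : R) (m : nat) :
  functional_norm phi = N%:E -> forall s, Sm mul m s -> aC (phi s) <= (m%:R)^+3 * N^+2.
Proof.
move=> hN s [n [nm [a [b [hab ->]]]]].
have N0 : 0 <= N by have := FN_ge0 hphi; rewrite hN lee_fin.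
rewrite (phi_sum hphi); apply: le_trans (aC_sum _) _.
apply: (@le_trans _ _ (\sum_(i < n) (N * m%:R)^+2)).
  apply: ler_sum => i _; rewrite (phiM hphi) aCM expr2.
  have [ha hb] := hab i.
  apply: ler_pM; rewrite ?aC_ge0 //.
    apply: le_trans (FN_bound hphi hN _) _; exact: ler_wpM2l.
  apply: le_trans (FN_bound hphi hN _) _; exact: ler_wpM2l.
rewrite sumr_const card_ord -[_ *+ n]mulr_natl.
have h : (n%:R <= m%:R :> R) by rewrite ler_nat.
have -> : (m%:R)^+3 * N^+2 = m%:R * (N * m%:R)^+2 :> R by ring.
by rewrite ler_wpM2r // sqr_ge0.
Qed.

Lemma mul0l (R : realType) (V : completeNormedModType R[i]) (mul : V -> V -> V) :
  banach_algebra_mul mul -> forall c, mul 0 c = 0.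
Proof.
move=> [_ L _ _] c; have := L 1 0 0 c; rewrite !scale1r addr0 => h.
by apply: (@addrI _ (mul 0 c)); rewrite addr0 -h.
Qed.

Lemma cover (R : realType) (V : completeNormedModType R[i]) (mul : V -> V -> V) :
  banach_algebra_mul mul -> sq_span mul = [set: V] -> forall x, exists m, Sm mul m x.
Proof.
move=> hB hS x.
have : sq_span mul x by rewrite hS.
move=> [n [c [a [b ->]]]].
pose a' i := c i *: a i.
have E : \sum_(i < n) c i *: mul (a i) (b i) = \sum_(i < n) mul (a' i) (b i).
  apply: eq_bigr => i _; have [_ L _ _] := hB.
  by rewrite /a' -[c i *: a i]addr0 L mul0l // addr0.
pose M := \sum_(i < n) (nV (a' i) + nV (b i)).
have hM i : nV (a' i) + nV (b i) <= M.
  rewrite /M (bigD1 i) //= lerDl; apply: sumr_ge0 => j _.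
  by rewrite addr_ge0 ?nV_ge0.
exists (maxn n (Num.Def.trunc M).+1); exists n; split; first exact: leq_maxl.
exists a', b; split => // i.
have hM' : M <= (maxn n (Num.Def.trunc M).+1)%:R.
  apply: le_trans (ltW (truncnS_gt M)) _; rewrite ler_nat; exact: leq_maxr.
have := hM i; have := nV_ge0 (a' i); have := nV_ge0 (b i).
by split; lra.
Qed.
Lemma baire_ball (R : realType) (V : completeNormedModType R[i]) (S : nat -> set V) :
  (forall x, exists m, S m x) ->
  exists m x0 r, 0 < r /\ forall y, nV (y - x0) < r -> forall eps, 0 < eps ->
     exists s, S m s /\ nV (y - s) < eps.
Proof.
move=> cov; apply: contrapT => H.
have NH : forall m x0 r, 0 < r -> exists y, nV (y - x0) < r /\
    exists eps, 0 < eps /\ forall s, S m s -> eps <= nV (y - s).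
  move=> m x0 r r0; apply: contrapT => C; apply: H; exists m, x0, r; split => // y hy eps heps.
  apply: contrapT => C2; apply: C; exists y; split => //; exists eps; split => // s Ss.
  rewrite leNgt; apply/negP => lt; apply: C2; exists s; split => //.
have step : forall (m : nat) (xr : V * R), exists ye : V * R, 0 < xr.2 ->
   [/\ 0 < ye.2, nV (ye.1 - xr.1) + ye.2 <= xr.2, ye.2 <= (m.+1%:R)^-1
     & forall z, nV (z - ye.1) <= ye.2 -> ~ S m z].
  move=> m [x r]; have [r0|r0] := ltP 0 r; last first.
    by exists (x, r) => /= h; exfalso; lra.
  have [y [hy [eps [e0 he]]]] := NH m x r r0.
  pose e := Num.min (eps / 2) (Num.min (r - nV (y - x)) (m.+1%:R^-1)).
  have e1 : e <= eps / 2 by rewrite /e !ge_min lexx.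
  have e2 : e <= r - nV (y - x) by rewrite /e !ge_min lexx !orbT.
  have e3 : e <= m.+1%:R^-1 by rewrite /e !ge_min lexx !orbT.
  have epos : 0 < e by rewrite /e !lt_min divr_gt0 //= subr_gt0 hy invr_gt0 ltr0n.
  exists (y, e) => _ /=; split => //; first by lra.
  move=> z hz Sz; have := he z Sz; rewrite nVB; lra.
pose f m := projT1 (choice (step m)).
have hf m : _ := projT2 (choice (step m)).
pose g := fix g (n : nat) : V * R := if n is k.+1 then f k (g k) else (0, 1).
pose x k := (g k).1.
pose r k := (g k).2.
have gpos : forall k, 0 < r k.
  elim => [|k IH]; first exact: ltr01.
  by have [] := hf k (g k) IH.
have P k : [/\ 0 < r k.+1, nV (x k.+1 - x k) + r k.+1 <= r k, r k.+1 <= (k.+1%:R)^-1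
     & forall z, nV (z - x k.+1) <= r k.+1 -> ~ S k z] := hf k (g k) (gpos k).
have nest : forall k d, nV (x (k + d)%N - x k) + r (k + d)%N <= r k.
  move=> k; elim => [|d IH]; first by rewrite addn0 subrr nV0 add0r.
  rewrite addnS; have [_ h2 _ _] := P (k + d)%N.
  have := nVD (x (k + d).+1 - x (k + d)%N) (x (k + d)%N - x k).
  rewrite addrA subrK; lra.
have cx : cvg (x @ \oo).
  apply: cauchy_cvg; apply: cauchy_exP => e e0.
  have e0' : 0 < complex.Re e by exact: (Re_lt e0).
  have eC : e = (complex.Re e)%:C%C := ReC (ltW e0).
  set E := complex.Re e in e0' eC.
  pose k := Num.Def.trunc (E^-1).
  have hk : (k.+1%:R)^-1 < E.
    by rewrite -ltf_pV2 ?posrE ?invr_gt0 // invrK truncnS_gt.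
  exists (x k.+1), k.+1 => // j /= hj.
  rewrite -ball_normE /ball_ /= eC nVC ltcR.
  have [d ->] : exists d, j = (k.+1 + d)%N by exists (j - k.+1)%N; rewrite subnKC.
  rewrite nVB; have := nest k.+1 d; have := gpos (k.+1 + d)%N; have [_ _ h3 _] := P k.
  move=> g1 g2; apply: le_lt_trans hk; apply: le_trans h3; lra.
have /cvg_ex [l Hl] := cx.
have lin : forall k, nV (l - x k) <= r k.
  move=> k; rewrite leNgt; apply/negP => hlt.
  pose d := nV (l - x k) - r k.
  have d0 : 0 < d by rewrite /d subr_gt0.
  have := proj1 (cvgrPdist_lt x l) Hl (d%:C%C); rewrite ltcR => /(_ _ d0).
  case => N _ HN.
  have := HN (k + N)%N (leq_addl _ _); rewrite /= nVC ltcR => hj.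
  have := nest k N; have := gpos (k + N)%N.
  have := nVD (l - x (k + N)%N) (x (k + N)%N - x k); rewrite addrA subrK.
  rewrite /d in d0 hj; lra.
have [m Sml] := cov l.
have [_ _ _ H4] := P m.
by apply: (H4 l) => //; rewrite nVB -nVN opprB; exact: lin.
Qed.

Unset Implicit Arguments.
Theorem proposition3p10 (R : realType) (V : completeNormedModType R[i])
    (mul : V -> V -> V) :
  banach_algebra_mul mul ->
  separable V ->
  sq_span mul = [set: V] ->
  (exists phi : V -> R[i], is_character mul phi) ->
  (0 < ereal_inf [set functional_norm phi | phi in [set phi | is_character mul phi]])%E.
Proof.
move=> hB _ hS _.
have [m [x0 [r [r0 Hb]]]] := baire_ball (cover hB hS).
pose K : R := (m%:R)^+3 + 1.
have K0 : 0 < K by rewrite /K ltr_wpDl // exprn_ge0.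
apply: (@lt_le_trans _ _ (r / (8 * K))%:E).
  by rewrite lte_fin divr_gt0 // mulr_gt0.
apply: le_ereal_inf_tmp => _ [phi hphi <-].
case hN: (functional_norm phi) => [N| |]; last 2 first.
- exact: leey.
- by have := FN_ge0 hphi; rewrite hN.
have N0 : 0 <= N by have := FN_ge0 hphi; rewrite hN lee_fin.
have hb := FN_bound hphi hN.
have hS' := Sm_bound hphi hN (m := m).
have Npos : 0 < N.
  have [_ _ [x hx]] := hphi.
  have a0 : 0 < aC (phi x).
    rewrite lt_def aC_ge0 andbT; apply/eqP => /aC_eq0 h; by rewrite h eqxx in hx.
  have := hb x; have := nV_ge0 x; nra.
have approx : forall y, nV (y - x0) < r -> aC (phi y) <= K * N^+2 + N * (r / 8).
  move=> y hy; have [s [Ss hs]] := Hb y hy (r / 8) ltac:(by rewrite divr_gt0).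
  have -> : y = s + (y - s) by rewrite addrC subrK.
  rewrite (phiD hphi); apply: le_trans (aCD _ _) _.
  have hK : (m%:R)^+3 * N^+2 <= K * N^+2 by rewrite ler_wpM2r ?sqr_ge0 // lerDl.
  have h2 : N * nV (y - s) <= N * (r / 8) by rewrite ler_wpM2l // ltW.
  have := hS' s Ss; have := hb (y - s); lra.
have unit : forall y, nV y <= 1 -> (r / 2) * aC (phi y) <= 2 * (K * N^+2 + N * (r / 8)).
  move=> y hy.
  pose y' := x0 + (r / 2)%:C%C *: y.
  have r2 : 0 <= r / 2 by rewrite divr_ge0 // ltW.
  have hy' : nV (y' - x0) < r.
    have -> : y' - x0 = (r / 2)%:C%C *: y by rewrite /y' addrC addKr.
    rewrite nVZ aCR ger0_norm //; have := nV_ge0 y; nra.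
  have e1 := approx y' hy'.
  have e2 := approx x0 ltac:(by rewrite subrr nV0).
  have E : (r / 2)%:C%C * phi y = phi y' - phi x0.
    by rewrite /y' (phiD hphi) (phiZ hphi) addrC addKr.
  have := aCD (phi y') (- phi x0); rewrite -E aCN aCM aCR ger0_norm //; lra.
have := FN2 (phi := phi) (c := r / 2) (D := 2 * (K * N^+2 + N * (r / 8))) ltac:(by rewrite divr_gt0) unit.
rewrite hN !lee_fin ler_pdivlMr ?divr_gt0 // => hle.
rewrite ler_pdivrMr ?mulr_gt0 //; nra.
Qed.
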